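(* Let $\boldsymbol{\Gamma}$ be a definable (boldface) pointclass that is downward closed with respect to Wadge reducibility. Assume that every $P\in\boldsymbol{\Gamma}([\mathbb{N}]^\mathbb{N})$ is Ramsey (i.e. $\mathrm{HS}(P)\neq\emptyset$) and that for every $h\in[\mathbb{N}]^\mathbb{N}$, $\boldsymbol{\Gamma}([h]^\mathbb{N})=\{P\cap[h]^\mathbb{N}: P\in\boldsymbol{\Gamma}([\mathbb{N}]^\mathbb{N})\}$. If $\mathsf{R}:\subseteq\boldsymbol{\Gamma}([\mathbb{N}]^\mathbb{N})\rightrightarrows[\mathbb{N}]^\mathbb{N}$ is a multivalued function such that $\mathsf{R}(x)=\mathrm{HS}(x)$ for every $x\in\operatorname{dom}(\mathsf{R})$, then $\mathrm{id}_2\not\le_{\mathrm{sW}}\mathsf{R}$. In particular $\mathrm{id}_2$ (and a fortiori $\mathsf{UC}_{\mathbb{N}^\mathbb{N}}$) is not strongly Weihrauch reducible to any of $\mathsf{wFindHS}_{\boldsymbol{\Sigma}^0_1}$, $\mathsf{wFindHS}_{\boldsymbol{\Pi}^0_1}$, $\mathsf{wFindHS}_{\boldsymbol{\Delta}^0_1}$, $\boldsymbol{\Sigma}^0_1\text{-}\mathsf{RT}$, $\boldsymbol{\Delta}^0_1\text{-}\mathsf{RT}$.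
   Context: Strong Weihrauch reducibility: $f\le_{\mathrm{sW}} g$ iff there are computable $\Phi,\Psi$ on Baire space with $\Psi\circ G\circ\Phi$ realizing $f$ for every realizer $G$ of $g$. $\mathrm{id}_2$ is the identity on $\{0,1\}$. The Ramsey space $[\mathbb{N}]^\mathbb{N}$ is the set of strictly increasing functions $\mathbb{N}\to\mathbb{N}$ with Baire-space topology (identified with infinite subsets of $\mathbb{N}$ via ranges); $fg=f\circ g$; $[h]^\mathbb{N}$ is the set of subsequences $hg$, $g\in[\mathbb{N}]^\mathbb{N}$. For $P\subseteq[\mathbb{N}]^\mathbb{N}$, $f$ is homogeneous for $P$ if either $fg\in P$ for all $g\in[\mathbb{N}]^\mathbb{N}$ ($f$ lands in $P$) or $fg\notin P$ for all $g$ ($f$ avoids $P$); $\mathrm{HS}(P)$ is the set of these; for a set $Q\subseteq[h]^\mathbb{N}$, homogeneity is defined analogously within $[h]^\mathbb{N}$. $\boldsymbol{\Gamma}([\mathbb{N}]^\mathbb{N})$ is regarded as a represented space. Open sets of $[\mathbb{N}]^\mathbb{N}$ are named by enumerations of sets of finite strictly increasing strings whose cones have union the set; clopen sets by pairs of names of the set and its complement. $\boldsymbol{\Sigma}^0_1\text{-}\mathsf{RT}(P)=\mathrm{HS}(P)$ for open $P$; $\boldsymbol{\Delta}^0_1\text{-}\mathsf{RT}(D)=\mathrm{HS}(D)$ for clopen $D$; $\mathsf{wFindHS}_{\boldsymbol{\Sigma}^0_1}$ is $P\mapsto\mathrm{HS}(P)\cap P$ on open $P$ with $\mathrm{HS}(P)\subseteq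 P$; $\mathsf{wFindHS}_{\boldsymbol{\Delta}^0_1}$ is the same on clopen inputs; $\mathsf{wFindHS}_{\boldsymbol{\Pi}^0_1}$ is $P\mapsto\mathrm{HS}(P)\setminus P$ on open $P$ with $\mathrm{HS}(P)\cap P=\emptyset$. $\mathsf{UC}_{\mathbb{N}^\mathbb{N}}$: given a name of a closed singleton subset of $\mathbb{N}^\mathbb{N}$, output its element. *)

(* Defs.v *)
From Stdlib Require Import List Arith.
Import ListNotations.

(* Partial recursive functions (Kleene mu-recursion), arity-free:      *)
(* arguments are a list, missing arguments read as 0.                  *)
Inductive rf : Type :=
| rf_zero
| rf_succ
| rf_proj (i : nat)
| rf_comp (f : rf) (gs : list rf)
| rf_prec (f g : rf)
| rf_min (f : rf).

Inductive reval : rf -> list nat -> nat -> Prop :=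
| ev_zero xs : reval rf_zero xs 0
| ev_succ xs : reval rf_succ xs (S (nth 0 xs 0))
| ev_proj i xs : reval (rf_proj i) xs (nth i xs 0)
| ev_comp f gs xs ys y :
    revals gs xs ys -> reval f ys y -> reval (rf_comp f gs) xs y
| ev_prec0 f g xs y :
    reval f xs y -> reval (rf_prec f g) (0 :: xs) y
| ev_precS f g n xs z y :
    reval (rf_prec f g) (n :: xs) z -> reval g (n :: z :: xs) y ->
    reval (rf_prec f g) (S n :: xs) y
| ev_min f xs y :
    reval f (y :: xs) 0 ->
    (forall z, z < y -> exists w, reval f (z :: xs) (S w)) ->
    reval (rf_min f) xs y
with revals : list rf -> list nat -> list nat -> Prop :=
| evs_nil xs : revals nil xs nil
| evs_cons g gs xs y ys :
    reval g xs y -> revals gs xs ys -> revals (g :: gs) xs (y :: ys).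

Definition cpair (x y : nat) : nat := (x + y) * S (x + y) / 2 + y.
Fixpoint code_list (l : list nat) : nat :=
  match l with nil => 0 | x :: l' => S (cpair x (code_list l')) end.
Definition prefix (p : nat -> nat) (k : nat) : list nat := map p (seq 0 k).

(* The partial functional Baire -> Baire computed by the (oracle) program e:
   output value q n = m iff, scanning longer and longer prefixes of p,
   e answers 0 ("need more") until it answers m+1. *)
Definition fcomputes (e : rf) (p q : nat -> nat) : Prop :=
  forall n, exists k,
    reval e [n; code_list (prefix p k)] (S (q n)) /\
    forall j, j < k -> reval e [n; code_list (prefix p j)] 0.

Definition rep (X : Type) := (nat -> nat) -> X -> Prop.

(* Multivalued f :⊆ X ⇉ Y as a relation; dom f = {x | exists y, f x y}. *)
Definition realizer {Z W : Type} (dZ : rep Z) (dW : rep W)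
    (g : Z -> W -> Prop) (G : (nat -> nat) -> option (nat -> nat)) : Prop :=
  forall p z, dZ p z -> (exists w, g z w) ->
    exists q, G p = Some q /\ exists w, g z w /\ dW q w.

Definition sW_le {X Y Z W : Type} (dX : rep X) (dY : rep Y) (f : X -> Y -> Prop)
    (dZ : rep Z) (dW : rep W) (g : Z -> W -> Prop) : Prop :=
  exists ePhi ePsi : rf,
    forall G, realizer dZ dW g G ->
      forall p x, dX p x -> (exists y, f x y) ->
        exists q, fcomputes ePhi p q /\
        exists q', G q = Some q' /\
        exists r, fcomputes ePsi q' r /\
        exists y, f x y /\ dY r y.

Definition delta_2 : rep bool := fun p b => p 0 = (if b then 1 else 0).
Definition id2 : bool -> bool -> Prop := fun a b => a = b.

(* The Ramsey space [N]^N : strictly increasing functions.            *)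
Definition incr (f : nat -> nat) : Prop := forall n, f n < f (S n).
Definition delta_RS : rep (nat -> nat) := fun p f => incr f /\ forall n, p n = f n.

Definition HS (P : (nat -> nat) -> Prop) (f : nat -> nat) : Prop :=
  incr f /\
  ((forall g, incr g -> P (fun n => f (g n))) \/
   (forall g, incr g -> ~ P (fun n => f (g n)))).

Definition sub_cone (h f : nat -> nat) : Prop :=
  exists g, incr g /\ forall n, f n = h (g n).

Definition is_pointclass_rep (Gamma : ((nat -> nat) -> Prop) -> Prop)
    (delta : rep ((nat -> nat) -> Prop)) : Prop :=
  (forall P, Gamma P -> forall f, P f -> incr f) /\
  (forall p P, delta p P -> Gamma P) /\
  (forall P, Gamma P -> exists p, delta p P) /\
  (forall p P Q, delta p P -> delta p Q -> forall f, P f <-> Q f).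

Definition continuous_RS (F : (nat -> nat) -> (nat -> nat)) : Prop :=
  (forall f, incr f -> incr (F f)) /\
  (forall f, incr f -> forall n, exists m, forall g, incr g ->
     (forall i, i < m -> f i = g i) -> forall i, i < n -> F f i = F g i).

Definition wadge_le (Q P : (nat -> nat) -> Prop) : Prop :=
  exists F, continuous_RS F /\ forall f, incr f -> (Q f <-> P (F f)).

Definition wadge_downward_closed (Gamma : ((nat -> nat) -> Prop) -> Prop) : Prop :=
  forall P Q, Gamma P -> (forall f, Q f -> incr f) -> wadge_le Q P -> Gamma Q.

Definition all_ramsey (Gamma : ((nat -> nat) -> Prop) -> Prop) : Prop :=
  forall P, Gamma P -> exists f, HS P f.

(* Gamma([h]^N) is the transfer of Gamma([N]^N) along the homeomorphism
   g |-> h g from [N]^N onto [h]^N; the hypothesis says it coincides with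
   the traces {P ∩ [h]^N : P in Gamma([N]^N)}. *)
Definition restriction_property (Gamma : ((nat -> nat) -> Prop) -> Prop) : Prop :=
  forall h, incr h -> forall S : (nat -> nat) -> Prop,
    (exists Q, Gamma Q /\
       forall f, S f <-> exists g, Q g /\ forall n, f n = h (g n)) <->
    (exists P, Gamma P /\ forall f, S f <-> P f /\ sub_cone h f).

Fixpoint sincr_list (l : list nat) : Prop :=
  match l with
  | nil => True
  | x :: l' => (match l' with nil => True | y :: _ => x < y end) /\ sincr_list l'
  end.

Definition is_prefix (s : list nat) (f : nat -> nat) : Prop :=
  forall i, i < length s -> nth i s 0 = f i.

Definition delta_open : rep ((nat -> nat) -> Prop) := fun p P =>
  (forall n, p n = 0 \/ exists s, sincr_list s /\ p n = S (code_list s)) /\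
  (forall f, P f <-> incr f /\ exists n s, p n = S (code_list s) /\ is_prefix s f).

Definition delta_clopen : rep ((nat -> nat) -> Prop) := fun p P =>
  delta_open (fun n => p (2 * n)) P /\
  delta_open (fun n => p (2 * n + 1)) (fun f => incr f /\ ~ P f).

Definition is_open (P : (nat -> nat) -> Prop) : Prop := exists p, delta_open p P.
Definition is_clopen (P : (nat -> nat) -> Prop) : Prop := exists p, delta_clopen p P.

Definition wFindHS_Sigma01 (P : (nat -> nat) -> Prop) (f : nat -> nat) : Prop :=
  is_open P /\ (forall g, HS P g -> P g) /\ HS P f /\ P f.
Definition wFindHS_Pi01 (P : (nat -> nat) -> Prop) (f : nat -> nat) : Prop :=
  is_open P /\ (forall g, HS P g -> ~ P g) /\ HS P f /\ ~ P f.
Definition wFindHS_Delta01 (P : (nat -> nat) -> Prop) (f : nat -> nat) : Prop :=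
  is_clopen P /\ (forall g, HS P g -> P g) /\ HS P f /\ P f.
Definition Sigma01_RT (P : (nat -> nat) -> Prop) (f : nat -> nat) : Prop :=
  is_open P /\ HS P f.
Definition Delta01_RT (P : (nat -> nat) -> Prop) (f : nat -> nat) : Prop :=
  is_clopen P /\ HS P f.

(* UC_{N^N}: closed subsets of Baire space named by enumerations of   *)
(* strings whose cones cover the complement; output by identity.      *)
Definition delta_Baire : rep (nat -> nat) := fun p x => forall n, p n = x n.
Definition delta_closed : rep ((nat -> nat) -> Prop) := fun p A =>
  forall x, A x <-> ~ exists n s, p n = S (code_list s) /\ is_prefix s x.
Definition UC_Baire (A : (nat -> nat) -> Prop) (x : nat -> nat) : Prop :=
  forall y, A y <-> (forall n, y n = x n).

(* Main.v *)
Require Import Defs.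
From Stdlib Require Import List Arith Lia FunctionalExtensionality ClassicalEpsilon Classical Cantor.
Import ListNotations.

Fixpoint reval_det e xs y (d : reval e xs y) {struct d} :
  forall y', reval e xs y' -> y = y'
with revals_det gs xs ys (d : revals gs xs ys) {struct d} :
  forall ys', revals gs xs ys' -> ys = ys'.
Proof.
- destruct d as [xs|xs|i xs|f gs xs ys y rs r|f g xs y r|f g n xs z y r1 r2|f xs y r e];
    intros y' d'.
  + inversion d'; subst; reflexivity.
  + inversion d'; subst; reflexivity.
  + inversion d'; subst; reflexivity.
  + inversion d'; subst.
    assert (ys = ys0) by (apply (revals_det _ _ _ rs); assumption). subst.
    apply (reval_det _ _ _ r); assumption.
  + inversion d'; subst. apply (reval_det _ _ _ r); assumption.
  + inversion d'; subst.
    assert (z = z0) by (apply (reval_det _ _ _ r1); assumption). subst.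
    apply (reval_det _ _ _ r2); assumption.
  + inversion d'; subst.
    destruct (Nat.lt_trichotomy y y') as [Hl|[He|Hl]]; auto.
    * match goal with H : forall z, z < y' -> _ |- _ => destruct (H y Hl) as [w Hw] end.
      pose proof (reval_det _ _ _ r _ Hw). discriminate.
    * destruct (e y' Hl) as [w Hw].
      match goal with H : reval f (y' :: xs) 0 |- _ =>
      pose proof (reval_det _ _ _ Hw _ H) end. discriminate.
- destruct d as [xs|g gs xs y ys r rs]; intros ys' d'.
  + inversion d'; reflexivity.
  + inversion d'; subst.
    f_equal. apply (reval_det _ _ _ r); assumption.
    apply (revals_det _ _ _ rs); assumption.
Qed.

Lemma fcomputes_det e p q q' : fcomputes e p q -> fcomputes e p q' -> q = q'.
Proof.
  intros H H'. apply functional_extensionality. intro n.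
  destruct (H n) as [k [Hk Hlt]]. destruct (H' n) as [k' [Hk' Hlt']].
  destruct (Nat.lt_trichotomy k k') as [l|[e'|l]].
  - pose proof (reval_det _ _ _ Hk _ (Hlt' k l)). discriminate.
  - subst. pose proof (reval_det _ _ _ Hk _ Hk'). congruence.
  - pose proof (reval_det _ _ _ Hk' _ (Hlt k' l)). discriminate.
Qed.

Definition common_sol {Z : Type} (dZ : rep Z) (g : Z -> (nat -> nat) -> Prop) :=
  forall q0 q1 : nat -> nat, exists h, forall q z, (q = q0 \/ q = q1) -> dZ q z ->
    (exists w, g z w) -> g z h /\ incr h.

Lemma core {X Y Z : Type} (dX : rep X) (dY : rep Y) (f : X -> Y -> Prop)
  (dZ : rep Z) (g : Z -> (nat -> nat) -> Prop) :
  common_sol dZ g -> forall p0 x0 p1 x1, dX p0 x0 -> dX p1 x1 ->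
  (exists y, f x0 y) -> (exists y, f x1 y) ->
  (forall r y0 y1, f x0 y0 -> dY r y0 -> f x1 y1 -> dY r y1 -> False) ->
  ~ sW_le dX dY f dZ delta_RS g.
Proof.
  intros Hc p0 x0 p1 x1 H0 H1 D0 D1 Hcon [ePhi [ePsi H]].
  set (G0 := fun q => Some (proj1_sig (constructive_indefinite_description _ (Hc q q)))).
  assert (RG0 : realizer dZ delta_RS g G0).
  { intros p z Hz Hd. exists (proj1_sig (constructive_indefinite_description _ (Hc p p))).
    split; [reflexivity|].
    destruct (constructive_indefinite_description _ (Hc p p)) as [h Hh]; simpl.
    destruct (Hh p z (or_introl eq_refl) Hz Hd) as [A B].
    exists h; split; [exact A| split; [exact B| reflexivity]]. }
  destruct (H G0 RG0 p0 x0 H0 D0) as [q0 [Fq0 _]].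
  destruct (H G0 RG0 p1 x1 H1 D1) as [q1 [Fq1 _]].
  destruct (Hc q0 q1) as [h01 Hh01].
  set (G1 := fun q => Some (if excluded_middle_informative (q = q0 \/ q = q1) then h01
     else proj1_sig (constructive_indefinite_description _ (Hc q q)))).
  assert (RG1 : realizer dZ delta_RS g G1).
  { intros p z Hz Hd. unfold G1.
    destruct (excluded_middle_informative (p = q0 \/ p = q1)) as [E|E].
    - eexists; split; [reflexivity|].
      destruct (Hh01 p z E Hz Hd) as [A B].
      exists h01; split; [exact A| split; [exact B| reflexivity]].
    - eexists; split; [reflexivity|].
      destruct (constructive_indefinite_description _ (Hc p p)) as [h Hh]; simpl.
      destruct (Hh p z (or_introl eq_refl) Hz Hd) as [A B].
      exists h; split; [exact A| split; [exact B| reflexivity]]. }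
  destruct (H G1 RG1 p0 x0 H0 D0) as [q0' [Fq0' [h0 [E0 [r0 [Fr0 [y0 [Fy0 Dy0]]]]]]]].
  destruct (H G1 RG1 p1 x1 H1 D1) as [q1' [Fq1' [h1 [E1 [r1 [Fr1 [y1 [Fy1 Dy1]]]]]]]].
  pose proof (fcomputes_det _ _ _ _ Fq0 Fq0'). subst q0'.
  pose proof (fcomputes_det _ _ _ _ Fq1 Fq1'). subst q1'.
  unfold G1 in E0, E1.
  destruct (excluded_middle_informative (q0 = q0 \/ q0 = q1)) as [_|N]; [|tauto].
  destruct (excluded_middle_informative (q1 = q0 \/ q1 = q1)) as [_|N]; [|tauto].
  injection E0 as <-. injection E1 as <-.
  pose proof (fcomputes_det _ _ _ _ Fr0 Fr1). subst r1.
  exact (Hcon r0 y0 y1 Fy0 Dy0 Fy1 Dy1).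
Qed.

Lemma incr_mono f : incr f -> forall i j, i < j -> f i < f j.
Proof.
  intros Hf i j Hij. induction Hij.
  - apply Hf.
  - specialize (Hf m). lia.
Qed.

Lemma incr_mono_le f : incr f -> forall i j, i <= j -> f i <= f j.
Proof.
  intros Hf i j Hij. destruct (Nat.eq_dec i j). subst; lia.
  pose proof (incr_mono f Hf i j). lia.
Qed.

Lemma incr_refl f : incr f -> forall i j, f i < f j -> i < j.
Proof.
  intros Hf i j H. destruct (Nat.lt_ge_cases i j); auto.
  pose proof (incr_mono_le f Hf j i). lia.
Qed.

Lemma incr_ge f : incr f -> forall n, n <= f n.
Proof. intros Hf n; induction n. lia. specialize (Hf n). lia. Qed.

Lemma incr_comp f g : incr f -> incr g -> incr (fun n => f (g n)).
Proof. intros Hf Hg n. apply incr_mono; auto. Qed.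

Lemma HS_ext P Q h : (forall f, P f <-> Q f) -> HS P h -> HS Q h.
Proof.
  intros E [Hi [A|A]]; split; auto; [left|right]; intros g Hg; specialize (A g Hg);
  rewrite <- E; auto.
Qed.

Section Cls.
Variable C : ((nat -> nat) -> Prop) -> Prop.
Hypothesis Cram : forall P, C P -> exists h, HS P h.
Hypothesis Cres : forall P f, C P -> incr f -> C (fun x => incr x /\ P (fun n => f (x n))).

Lemma two_sets P Q : C P -> C Q -> exists h, HS P h /\ HS Q h.
Proof.
  intros HP HQ. destruct (Cram P HP) as [f [Hf Pf]].
  destruct (Cram _ (Cres Q f HQ Hf)) as [g [Hg Qg]].
  exists (fun n => f (g n)). split; split; try apply incr_comp; auto.
  - destruct Pf as [A|A]; [left|right]; intros k Hk; apply (A (fun n => g (k n)));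
    apply incr_comp; auto.
  - destruct Qg as [A|A]; [left|right]; intros k Hk; specialize (A k Hk); simpl in A.
    + apply A.
    + intro Hq. apply A. split; [apply incr_comp; auto| exact Hq].
Qed.

Lemma common_from_class (dZ : rep ((nat -> nat) -> Prop)) g
  (T1 : forall q z, dZ q z -> (exists w, g z w) -> C z)
  (T2 : forall q z z', dZ q z -> dZ q z' -> forall f, z f <-> z' f)
  (T3 : forall z h, (exists w, g z w) -> HS z h -> g z h) : common_sol dZ g.
Proof.
  intros q0 q1.
  assert (K : forall z0 z1 h, (forall z, dZ q0 z -> (exists w, g z w) -> dZ q0 z0 /\ HS z0 h) ->
     (forall z, dZ q1 z -> (exists w, g z w) -> dZ q1 z1 /\ HS z1 h) -> incr h ->
     forall q z, (q = q0 \/ q = q1) -> dZ q z -> (exists w, g z w) -> g z h /\ incr h).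
  { intros z0 z1 h K0 K1 Hh q z [E|E] Hz Hd; subst q; split; auto; apply T3; auto.
    - destruct (K0 z Hz Hd) as [A B]. apply (HS_ext z0); auto. apply (T2 q0); auto.
    - destruct (K1 z Hz Hd) as [A B]. apply (HS_ext z1); auto. apply (T2 q1); auto. }
  destruct (classic (exists z, dZ q0 z /\ exists w, g z w)) as [[z0 [Hz0 Hd0]]|N0];
  destruct (classic (exists z, dZ q1 z /\ exists w, g z w)) as [[z1 [Hz1 Hd1]]|N1].
  - destruct (two_sets z0 z1 (T1 _ _ Hz0 Hd0) (T1 _ _ Hz1 Hd1)) as [h [A B]].
    exists h. apply (K z0 z1); auto. apply A.
  - destruct (Cram z0 (T1 _ _ Hz0 Hd0)) as [h A]. exists h. apply (K z0 z0); auto.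
    intros z Hz Hd; exfalso; eauto. apply A.
  - destruct (Cram z1 (T1 _ _ Hz1 Hd1)) as [h A]. exists h. apply (K z1 z1); auto.
    intros z Hz Hd; exfalso; eauto. apply A.
  - exists (fun n => n). apply (K (fun _ => True) (fun _ => True)).
    intros z Hz Hd; exfalso; eauto. intros z Hz Hd; exfalso; eauto. intro; lia.
Qed.
End Cls.

Lemma part2_core {Z : Type} (dZ : rep Z) g : common_sol dZ g ->
  ~ sW_le delta_2 delta_2 id2 dZ delta_RS g.
Proof.
  intro Hc. apply (core _ _ _ _ _ Hc (fun _ => 0) false (fun _ => 1) true); try reflexivity.
  - exists false; reflexivity.
  - exists true; reflexivity.
  - intros r y0 y1 A B C' D'. unfold id2, delta_2 in *. subst. congruence.
Qed.

Lemma part1 : forall (Gamma : ((nat -> nat) -> Prop) -> Prop)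
          (delta : (nat -> nat) -> ((nat -> nat) -> Prop) -> Prop),
     is_pointclass_rep Gamma delta ->
     wadge_downward_closed Gamma ->
     all_ramsey Gamma ->
     restriction_property Gamma ->
     forall R : ((nat -> nat) -> Prop) -> (nat -> nat) -> Prop,
       (forall x y, R x y -> Gamma x) ->
       (forall x, (exists y, R x y) -> forall y, R x y <-> HS x y) ->
       ~ sW_le delta_2 delta_2 id2 delta delta_RS R.
Proof.
  intros Gamma delta [G1 [G2 [G3 G4]]] Hw Hr _ R HR HRS.
  assert (Cres : forall P f, Gamma P -> incr f ->
            Gamma (fun x => incr x /\ P (fun n => f (x n)))).
  { intros P f HP Hf. apply (Hw P); auto. intros g [Hg _]; exact Hg.
    exists (fun x n => f (x n)). split; [split|].
    - intros; apply incr_comp; auto.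
    - intros f' _ n. exists n. intros g' _ E i Hi. rewrite E; auto.
    - intros f' Hf'. split; [intros [_ A]; exact A| intro A; split; auto]. }
  apply part2_core. apply (common_from_class Gamma Hr Cres).
  - intros q z _ [w Hw']. exact (HR z w Hw').
  - exact G4.
  - intros z h Hd Hh. exact (proj2 (HRS z Hd h) Hh).
Qed.

Definition cv (c b : nat) : nat := if b =? c then (if c =? 0 then 1 else 0) else b.
Lemma cv_ne c b : cv c b <> c.
Proof. unfold cv. destruct (b =? c) eqn:E; [destruct c; simpl; lia|apply Nat.eqb_neq; auto]. Qed.

Definition sname (c : nat) : nat -> nat := fun m =>
  S (code_list (repeat c (fst (of_nat m)) ++ [cv c (snd (of_nat m))])).

Lemma cpair_inj a b a' b' : cpair a b = cpair a' b' -> a = a' /\ b = b'.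
Proof.
  intro H. assert (E : to_nat (a, b) = to_nat (a', b')).
  { rewrite !to_nat_spec2. unfold cpair in H.
    rewrite (Nat.add_comm b a), (Nat.add_comm b' a'). lia. }
  apply to_nat_inj in E. injection E; auto.
Qed.

Lemma code_inj l l' : code_list l = code_list l' -> l = l'.
Proof.
  revert l'; induction l as [|x l IH]; intros [|x' l'] H; simpl in H; try discriminate; auto.
  injection H as H. apply cpair_inj in H as [-> H]. f_equal; auto.
Qed.

Lemma sname_ok c : delta_closed (sname c) (fun y => forall n, y n = c).
Proof.
  intro y. split.
  - intros Hy [m [s [E P]]]. unfold sname in E. injection E as E. apply code_inj in E. subst s.
    set (a := fst (of_nat m)) in *. set (b := snd (of_nat m)) in *.
    assert (L : a < length (repeat c a ++ [cv c b])) by (rewrite length_app, repeat_length; simpl; lia).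
    specialize (P a L). rewrite app_nth2 in P; rewrite repeat_length in *; [|lia].
    rewrite Nat.sub_diag in P. simpl in P. rewrite Hy in P. apply (cv_ne c b); auto.
  - intros N n. destruct (Nat.eq_dec (y n) c) as [e|ne]; auto. exfalso.
    assert (Hex : exists k, y k <> c /\ forall i, i < k -> y i = c).
    { induction n as [n IHn] using lt_wf_ind.
      destruct (classic (exists i, i < n /\ y i <> c)) as [[i [Hi Hne]]|Hno].
      - apply (IHn i Hi Hne).
      - exists n; split; auto. intros i Hi. destruct (Nat.eq_dec (y i) c); auto. exfalso; eauto. }
    destruct Hex as [k [Hk Hbef]].
    apply N. exists (to_nat (k, y k)). exists (repeat c k ++ [cv c (y k)]).
    split. unfold sname. rewrite cancel_of_to. reflexivity.
    intros i Hi. rewrite length_app, repeat_length in Hi. simpl in Hi.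
    destruct (Nat.lt_ge_cases i k).
    + rewrite app_nth1 by (rewrite repeat_length; lia). rewrite nth_repeat_lt by lia.
      symmetry; auto.
    + assert (i = k) by lia. subst. rewrite app_nth2 by (rewrite repeat_length; lia).
      rewrite repeat_length, Nat.sub_diag. simpl. unfold cv.
      destruct (y k =? c) eqn:Eq; [apply Nat.eqb_eq in Eq; contradiction|reflexivity].
Qed.

Lemma part3_core {Z : Type} (dZ : rep Z) g : common_sol dZ g ->
  ~ sW_le delta_closed delta_Baire UC_Baire dZ delta_RS g.
Proof.
  intro Hc. apply (core _ _ _ _ _ Hc (sname 0) (fun y => forall n, y n = 0)
     (sname 1) (fun y => forall n, y n = 1)); try apply sname_ok.
  - exists (fun _ => 0). intro y; tauto.
  - exists (fun _ => 1). intro y; tauto.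
  - intros r y0 y1 U0 D0 U1 D1. unfold UC_Baire, delta_Baire in *.
    assert (A : 0 = y0 0) by (apply (proj1 (U0 (fun _ => 0))); auto).
    assert (B : 1 = y1 0) by (apply (proj1 (U1 (fun _ => 1))); auto).
    rewrite <- D0 in A. rewrite <- D1 in B. congruence.
Qed.


Definition sub (A C : nat -> nat) : Prop := incr C /\ forall n, exists i, C n = A i.
Definition above (s : list nat) (C : nat -> nat) : Prop := forall x, In x s -> forall n, x < C n.
Definition ext (s : list nat) (C : nat -> nat) : nat -> nat :=
  fun n => if n <? length s then nth n s 0 else C (n - length s).
Fixpoint ss (l : list nat) : Prop :=
  match l with [] => True | x :: l' => (forall y, In y l' -> x < y) /\ ss l' end.
Fixpoint subl (l : list nat) : list (list nat) :=
  match l with [] => [[]] | x :: l' => subl l' ++ map (cons x) (subl l') end.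

Lemma in_snoc (t : list nat) a : In a (t ++ [a]).
Proof. apply in_or_app; simpl; auto. Qed.

Lemma sub_trans A B C : sub A B -> sub B C -> sub A C.
Proof.
  intros [_ HB] [HC HC']. split; auto. intro n. destruct (HC' n) as [i Hi].
  destruct (HB i) as [j Hj]. exists j; congruence.
Qed.
Lemma sub_refl A : incr A -> sub A A.
Proof. intro H; split; auto. intro n; exists n; auto. Qed.
Lemma sub_shift A N : incr A -> sub A (fun n => A (n + N)).
Proof. intro H; split. intro n; apply H. intro n; exists (n + N); auto. Qed.
Lemma sub_incr A C : sub A C -> incr C.
Proof. intros [H _]; exact H. Qed.

Lemma ss_app t a : ss (t ++ [a]) <-> ss t /\ forall x, In x t -> x < a.
Proof.
  induction t as [|y t IH]; simpl.
  - split; [intros _; split; auto; intros x []| intros _; split; auto; intros z []].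
  - rewrite IH. split.
    + intros [H1 [H2 H3]]. split; [split; auto; intros z Hz; apply H1; apply in_or_app; auto|].
      intros x [<-|Hx]; auto. apply H1; apply in_or_app; simpl; auto.
    + intros [[H1 H2] H3]. split; [|split; auto]. intros z Hz.
      apply in_app_or in Hz as [Hz|[<-|[]]]; auto.
Qed.

Lemma subl_complete n : forall a s, ss s -> (forall x, In x s -> a <= x < a + n) ->
  In s (subl (seq a n)).
Proof.
  induction n as [|n IH]; intros a s Hs Hr.
  - destruct s as [|x s]; simpl; auto. specialize (Hr x (or_introl eq_refl)). lia.
  - simpl. apply in_or_app. destruct s as [|x s].
    + left. apply IH; simpl; auto. intros x [].
    + destruct Hs as [H1 H2]. destruct (Nat.eq_dec x a) as [->|ne].
      * right. apply in_map. apply IH; auto. intros y Hy.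
        specialize (H1 y Hy). specialize (Hr y (or_intror Hy)). lia.
      * left. apply IH; simpl; auto. intros y [<-|Hy].
        -- specialize (Hr x (or_introl eq_refl)). lia.
        -- specialize (H1 y Hy). pose proof (Hr y (or_intror Hy)). pose proof (Hr x (or_introl eq_refl)). lia.
Qed.

Lemma list_sum_ge x s : In x s -> x <= list_sum s.
Proof. induction s as [|y s IH]; simpl; [intros []|intros [->|H]; [lia|specialize (IH H); lia]]. Qed.

Lemma ss_map C : incr C -> forall k a, ss (map C (seq a k)).
Proof.
  intros HC k. induction k as [|k IH]; intro a; simpl; auto. split; auto.
  intros y Hy. apply in_map_iff in Hy as [j [<- Hj]]. apply in_seq in Hj.
  apply incr_mono; auto; lia.
Qed.

Lemma ext_snoc s D : ext (s ++ [D 0]) (fun m => D (S m)) = ext s D.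
Proof.
  apply functional_extensionality; intro n. unfold ext. rewrite length_app. simpl.
  destruct (n <? length s) eqn:E1.
  - apply Nat.ltb_lt in E1. assert (n <? length s + 1 = true) by (apply Nat.ltb_lt; lia).
    rewrite H. rewrite app_nth1; auto.
  - apply Nat.ltb_ge in E1. destruct (Nat.eq_dec n (length s)) as [->|ne].
    + assert (length s <? length s + 1 = true) by (apply Nat.ltb_lt; lia). rewrite H.
      rewrite app_nth2 by lia. rewrite Nat.sub_diag; reflexivity.
    + assert (n <? length s + 1 = false) by (apply Nat.ltb_ge; lia). rewrite H.
      f_equal. lia.
Qed.

Lemma ext_nil C : ext [] C = C.
Proof. apply functional_extensionality; intro n. unfold ext. simpl. f_equal; lia. Qed.

Lemma unif {X : Type} (L : list X) (Q : X -> nat -> Prop) :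
  (forall s, In s L -> exists N, forall n, N <= n -> Q s n) ->
  exists N, forall s, In s L -> forall n, N <= n -> Q s n.
Proof.
  induction L as [|x L IH]; intro H.
  - exists 0; intros s [].
  - destruct (H x (or_introl eq_refl)) as [N1 H1].
    destruct IH as [N2 H2]. intros s Hs; apply H; simpl; auto.
    exists (N1 + N2). intros s [<-|Hs] n Hn; [apply H1|apply H2]; auto; lia.
Qed.

Lemma inf_sub (Good : nat -> Prop) B : incr B -> (forall N, exists n, N <= n /\ Good n) ->
  exists C, sub B C /\ forall k, exists n, C k = B n /\ Good n.
Proof.
  intros HB H.
  set (c := fun N => proj1_sig (constructive_indefinite_description _ (H N))).
  assert (Hc : forall N, N <= c N /\ Good (c N)).
  { intro N. unfold c. destruct (constructive_indefinite_description _ (H N)); auto. }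
  set (idx := fix idx k := match k with 0 => c 0 | S k => c (S (idx k)) end).
  assert (Hi : forall k, idx k < idx (S k)).
  { intro k. simpl. destruct (Hc (S (idx k))); lia. }
  exists (fun k => B (idx k)). split; [split|].
  - intro k. apply incr_mono; auto.
  - intro n; exists (idx n); auto.
  - intro k. exists (idx k). split; auto. destruct k; simpl; apply Hc.
Qed.

Section Ramsey.
Variable P : (nat -> nat) -> Prop.
Hypothesis Hopen : forall g, P g -> exists k, forall g', (forall i, i < k -> g' i = g i) -> P g'.

Definition acc s A := forall C, sub A C -> above s C -> P (ext s C).
Definition rej s A := forall A', sub A A' -> ~ acc s A'.
Definition dec s A := acc s A \/ rej s A.
Definition inB (B : nat -> nat) (s : list nat) := forall x, In x s -> exists i, x = B i.

Lemma acc_mono s A B : acc s A -> sub A B -> acc s B.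
Proof. intros H HAB C HC Ha. apply H; auto. eapply sub_trans; eauto. Qed.
Lemma rej_mono s A B : rej s A -> sub A B -> rej s B.
Proof. intros H HAB A' HA'. apply H. eapply sub_trans; eauto. Qed.
Lemma dec_mono s A B : dec s A -> sub A B -> dec s B.
Proof. intros [H|H] HAB; [left; eapply acc_mono|right; eapply rej_mono]; eauto. Qed.

Lemma dec_exists s A : incr A -> exists B, sub A B /\ dec s B.
Proof.
  intro HA. destruct (classic (rej s A)) as [R|R].
  - exists A; split; [apply sub_refl; auto|right; auto].
  - apply not_all_ex_not in R as [A' R]. apply imply_to_and in R as [H1 H2].
    apply NNPP in H2. exists A'; split; auto; left; auto.
Qed.

Lemma dec_list L A : incr A -> exists B, sub A B /\ forall s, In s L -> dec s B.
Proof.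
  revert A; induction L as [|s L IH]; intros A HA.
  - exists A; split; [apply sub_refl; auto| intros s []].
  - destruct (dec_exists s A HA) as [B1 [S1 D1]].
    destruct (IH B1 (sub_incr _ _ S1)) as [B2 [S2 D2]].
    exists B2; split; [eapply sub_trans; eauto|].
    intros t [<-|Ht]; auto. eapply dec_mono; eauto.
Qed.

Lemma transfer s T B : (forall C, sub B C -> above s C -> sub T C) -> dec s T -> dec s B.
Proof.
  intros H [A|R].
  - left. intros C HC Ha. apply A; auto.
  - right. intros A' HA' Acc.
    set (N := S (list_sum s)).
    assert (S1 : sub A' (fun n => A' (n + N))) by (apply sub_shift; apply (sub_incr _ _ HA')).
    assert (Ab : above s (fun n => A' (n + N))).
    { intros x Hx n. pose proof (list_sum_ge x s Hx).
      pose proof (incr_ge A' (sub_incr _ _ HA') (n + N)). unfold N in *. lia. }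
    apply (R (fun n => A' (n + N))).
    + apply H; auto. eapply sub_trans; eauto.
    + eapply acc_mono; eauto.
Qed.

Fixpoint stg (Dc : list (list nat) -> (nat -> nat) -> (nat -> nat)) (A0 : nat -> nat) k :
  nat -> nat :=
  match k with
  | 0 => A0
  | S k => Dc (subl (seq 0 (S (stg Dc A0 k 0)))) (fun n => stg Dc A0 k (S n))
  end.

Definition AllDec B := forall s, ss s -> inB B s -> dec s B.

Lemma fusion A : incr A -> exists B, sub A B /\ AllDec B.
Proof.
  intro HA. destruct (dec_exists [] A HA) as [A0 [SA0 DA0]].
  assert (Hd : forall L A, exists A', incr A -> sub A A' /\ forall s, In s L -> dec s A').
  { intros L A1. destruct (classic (incr A1)) as [I|I].
    - destruct (dec_list L A1 I) as [B HB]. exists B; auto.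
    - exists A1; intro; contradiction. }
  set (Dc := fun L A => proj1_sig (constructive_indefinite_description _ (Hd L A))).
  assert (HDc : forall L A, incr A -> sub A (Dc L A) /\ forall s, In s L -> dec s (Dc L A)).
  { intros L A1. unfold Dc. destruct (constructive_indefinite_description _ (Hd L A1)); auto. }
  set (St := stg Dc A0).
  assert (I0 : incr A0) by (apply (sub_incr _ _ SA0)).
  assert (Ia : forall k, incr (St k) /\ sub (fun n => St k (S n)) (St (S k))).
  { induction k as [|k [IH _]].
    - simpl. split; auto. apply HDc. intro n; apply I0.
    - split; [apply (sub_incr (fun n => St k (S n))); apply HDc; intro n; apply IH|].
      change (St (S (S k))) with (Dc (subl (seq 0 (S (St (S k) 0)))) (fun n => St (S k) (S n))).
      apply HDc. intro n. apply (sub_incr _ _ (proj1 (HDc _ (fun n => St k (S n))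
         (fun n => IH (S n))))). }
  assert (Sb : forall j d, sub (St j) (St (j + d))).
  { intros j d. induction d as [|d IH].
    - rewrite Nat.add_0_r. apply sub_refl. apply Ia.
    - rewrite Nat.add_succ_r. eapply sub_trans; [exact IH|].
      eapply sub_trans; [|apply (Ia (j + d))].
      split. intro n; apply Ia. intro n. exists (S n). reflexivity. }
  set (B := fun k => St k 0).
  assert (IB : incr B).
  { intro k. unfold B. destruct (proj2 (proj2 (Ia k)) 0) as [i Hi]. rewrite Hi.
    apply incr_mono; [apply Ia|lia]. }
  assert (InSt : forall i j, j <= i -> exists m, B i = St j m).
  { intros i j Hij. destruct (Sb j (i - j)) as [_ H]. destruct (H 0) as [m Hm].
    exists m. unfold B. replace i with (j + (i - j)) by lia. auto. }
  assert (SAB : sub A0 B).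
  { split; auto. intro n. destruct (InSt n 0 (Nat.le_0_l n)) as [m Hm]. exists m; auto. }
  exists B. split; [eapply sub_trans; eauto|].
  intros s Hs HinB. destruct s as [|x s'] eqn:Es.
  - eapply dec_mono; eauto.
  - rewrite <- Es in *. assert (s <> []) by (subst; discriminate).
    destruct (exists_last H) as [t [a Eta]]. rewrite Eta in Hs, HinB |- *.
    apply ss_app in Hs as [Hst Hlt].
    destruct (HinB a (in_snoc t a)) as [j Hj].
    apply (transfer _ (St (S j))).
    + intros C HC Ha. split; [apply HC|]. intro n. destruct HC as [_ HC].
      destruct (HC n) as [i Hi]. assert (a < C n) by (apply Ha; apply in_or_app; simpl; auto).
      assert (j < i) by (apply (incr_refl B IB); congruence).
      destruct (InSt i (S j)) as [m Hm]; [lia|]. exists m; congruence.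
    + change (St (S j)) with (Dc (subl (seq 0 (S (St j 0)))) (fun n => St j (S n))).
      apply HDc; [intro n; apply Ia|]. apply subl_complete.
      * apply ss_app; auto.
      * intros y Hy. apply in_app_or in Hy as [Hy|[<-|[]]].
        -- specialize (Hlt y Hy). unfold B in Hj. lia.
        -- unfold B in Hj. lia.
Qed.

Lemma thresh B s : incr B -> AllDec B -> rej s B -> ss s -> inB B s ->
  exists N, forall n, N <= n -> (forall x, In x s -> x < B n) -> rej (s ++ [B n]) B.
Proof.
  intros IB AD R Hs Hin. apply NNPP; intro Hn.
  assert (Inf : forall N, exists n, N <= n /\ ((forall x, In x s -> x < B n) /\
      acc (s ++ [B n]) B)).
  { intro N. apply NNPP; intro H'. apply Hn. exists N. intros n Hn' Ha.
    destruct (AD (s ++ [B n])) as [A|A]; auto.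
    - apply ss_app; auto.
    - intros x Hx. apply in_app_or in Hx as [Hx|[<-|[]]]; eauto.
    - exfalso; apply H'; eauto. }
  destruct (inf_sub _ B IB Inf) as [C [SC HC]].
  apply (R C SC). intros D SD Ab.
  destruct SD as [ID HD]. destruct (HD 0) as [i Hi]. destruct (HC i) as [n [En [_ An]]].
  rewrite <- ext_snoc. rewrite Hi, En. apply An.
  - split. intro m; apply ID. intro m. destruct (HD (S m)) as [i' Hi'].
    destruct (HC i') as [n' [En' _]]. exists n'. congruence.
  - intros x Hx m. apply in_app_or in Hx as [Hx|[<-|[]]].
    + apply Ab; auto.
    + rewrite <- En, <- Hi. apply incr_mono; auto; lia.
Qed.

Lemma build_H B : incr B -> AllDec B -> rej [] B ->
  exists H, sub B H /\ forall s, ss s -> inB H s -> rej s B.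
Proof.
  intros IB AD R0.
  set (Q := fun s n => rej s B -> ss s -> inB B s -> (forall x, In x s -> x < B n) ->
                       rej (s ++ [B n]) B).
  assert (HN : forall m, exists N, forall s, In s (subl (seq 0 (S m))) -> forall n, N <= n -> Q s n).
  { intro m. apply unif. intros s _.
    destruct (classic (rej s B /\ ss s /\ inB B s)) as [[A1 [A2 A3]]|N].
    - destruct (thresh B s IB AD A1 A2 A3) as [N HN]. exists N. intros n Hn _ _ _ Ha.
      apply HN; auto.
    - exists 0. intros n _ A1 A2 A3. exfalso; auto. }
  set (Nf := fun m => proj1_sig (constructive_indefinite_description _ (HN m))).
  assert (HNf : forall m s, In s (subl (seq 0 (S m))) -> forall n, Nf m <= n -> Q s n).
  { intro m. unfold Nf. destruct (constructive_indefinite_description _ (HN m)); auto. }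
  set (idx := fix idx k := match k with 0 => Nf 0 | S k => Nat.max (S (idx k)) (Nf (B (idx k))) end).
  set (H := fun k => B (idx k)).
  assert (Ii : forall k, idx k < idx (S k)).
  { intro k. change (idx (S k)) with (Nat.max (S (idx k)) (Nf (B (idx k)))). lia. }
  assert (IH' : incr H) by (intro k; unfold H; apply incr_mono; [exact IB|apply Ii]).
  set (mk := fun k => match k with 0 => 0 | S k' => H k' end).
  assert (Hmk : forall k, Nf (mk k) <= idx k).
  { intros [|k]. apply le_n. change (idx (S k)) with (Nat.max (S (idx k)) (Nf (B (idx k)))).
    change (mk (S k)) with (B (idx k)). lia. }
  assert (Inv : forall k s, ss s -> (forall x, In x s -> exists i, i < k /\ x = H i) -> rej s B).
  { induction k as [|k IHk]; intros s Hs Hr.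
    - destruct s as [|x s]; auto. destruct (Hr x (or_introl eq_refl)) as [i [Hi _]]. lia.
    - destruct s as [|x s'] eqn:Es; auto. rewrite <- Es in *.
      assert (s <> []) by (subst; discriminate).
      destruct (exists_last H0) as [t [a Eta]]. rewrite Eta in Hs, Hr |- *.
      apply ss_app in Hs as [Hst Hlt].
      destruct (Hr a (in_snoc t a)) as [i [Hik Ha]].
      assert (Ht : forall x, In x t -> exists i', i' < i /\ x = H i').
      { intros y Hy. destruct (Hr y (in_or_app _ _ _ (or_introl Hy))) as [i' [_ Hi']].
        exists i'; split; auto. apply (incr_refl H IH'). rewrite <- Hi', <- Ha; auto. }
      destruct (Nat.eq_dec i k) as [->|ne].
      + assert (Rt : rej t B) by (apply IHk; auto).
        rewrite Ha. unfold H. apply (HNf (mk k)); auto.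
        * apply subl_complete; auto. intros y Hy. destruct (Ht y Hy) as [i' [Hi' ->]].
          split; [lia|]. destruct k as [|k]; [lia|]. assert (Em : mk (S k) = H k) by reflexivity. rewrite Em.
          pose proof (incr_mono_le H IH' i' k). lia.
        * intros y Hy. destruct (Ht y Hy) as [i' [_ ->]]. exists (idx i'); auto.
        * intros y Hy. specialize (Hlt y Hy). rewrite Ha in Hlt. exact Hlt.
      + apply IHk. apply ss_app; auto.
        intros y Hy. apply in_app_or in Hy as [Hy|[<-|[]]].
        * destruct (Ht y Hy) as [i' [Hi' ->]]. exists i'; split; auto; lia.
        * exists i; split; auto; lia. }
  exists H. split.
  - split; auto. intro n; exists (idx n); auto.
  - intros s Hs Hin. apply (Inv (S (list_sum s))); auto. intros x Hx.
    destruct (Hin x Hx) as [i ->]. exists i. split; auto.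
    pose proof (list_sum_ge _ _ Hx). pose proof (incr_ge H IH' i). lia.
Qed.

Theorem open_ramsey A : incr A ->
  exists h, sub A h /\ ((forall C, sub h C -> P C) \/ (forall C, sub h C -> ~ P C)).
Proof.
  intro IA. destruct (fusion A IA) as [B [SB AD]].
  assert (IB : incr B) by (apply (sub_incr _ _ SB)).
  destruct (AD [] I (fun x (Hx : In x []) => match Hx with end)) as [Acc|Rej].
  - exists B. split; auto. left. intros C SC. rewrite <- (ext_nil C). apply Acc; auto.
    intros x [].
  - destruct (build_H B IB AD Rej) as [H [SH RH]].
    exists H. split; [eapply sub_trans; eauto|]. right. intros C SC PC.
    destruct (Hopen C PC) as [k Hk].
    set (s := map C (seq 0 k)).
    assert (Rs : rej s B).
    { apply RH. apply ss_map, SC. intros x Hx. unfold s in Hx.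
      apply in_map_iff in Hx as [j [<- _]]. destruct SC as [_ SC]. apply SC. }
    apply (Rs (fun n => C (n + k))).
    + eapply sub_trans; [exact SH|]. eapply sub_trans; [exact SC|]. apply sub_shift, SC.
    + intros D SD Ab. apply Hk. intros i Hi. unfold ext, s.
      rewrite length_map, length_seq. apply Nat.ltb_lt in Hi as Hi'. rewrite Hi'.
      rewrite nth_indep with (d' := C 0) by (rewrite length_map, length_seq; lia).
      rewrite map_nth, seq_nth; auto.
Qed.
End Ramsey.

Definition Copen (P : (nat -> nat) -> Prop) : Prop :=
  exists P', (forall g, incr g -> (P g <-> P' g)) /\
    (forall g, P' g -> exists k, forall g', (forall i, i < k -> g' i = g i) -> P' g').

Lemma Copen_ram P : Copen P -> exists h, HS P h.
Proof.
  intros [P' [E O]]. destruct (open_ramsey P' O (fun n => n) (fun n => le_n _)) as [h [Sh D]].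
  assert (Ih : incr h) by (apply (sub_incr _ _ Sh)).
  assert (Sc : forall g, incr g -> sub h (fun n => h (g n))).
  { intros g Hg. split; [apply incr_comp; auto|]. intro n; exists (g n); auto. }
  exists h. split; auto. destruct D as [D|D]; [left|right]; intros g Hg;
  rewrite (E _ (incr_comp _ _ Ih Hg)); apply D; auto.
Qed.

Lemma Copen_res P f : Copen P -> incr f -> Copen (fun x => incr x /\ P (fun n => f (x n))).
Proof.
  intros [P' [E O]] Hf. exists (fun g => P' (fun n => f (g n))). split.
  - intros g Hg. rewrite (E _ (incr_comp _ _ Hf Hg)). tauto.
  - intros g Hg. destruct (O _ Hg) as [k Hk]. exists k. intros g' Hg'. apply Hk.
    intros i Hi. rewrite Hg'; auto.
Qed.

Lemma open_Copen q z : delta_open q z -> Copen z.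
Proof.
  intros [_ Hz]. exists (fun x => exists n s, q n = S (code_list s) /\ is_prefix s x). split.
  - intros g Hg. rewrite Hz. tauto.
  - intros g [n [s [E Pf]]]. exists (length s). intros g' Hg'. exists n, s. split; auto.
    intros i Hi. rewrite Hg'; auto.
Qed.

Lemma open_ext q z z' : delta_open q z -> delta_open q z' -> forall f, z f <-> z' f.
Proof. intros [_ H1] [_ H2] f. rewrite H1, H2. tauto. Qed.

Lemma clopen_Copen q z : delta_clopen q z -> Copen z.
Proof. intros [H _]. eapply open_Copen; eauto. Qed.
Lemma clopen_ext q z z' : delta_clopen q z -> delta_clopen q z' -> forall f, z f <-> z' f.
Proof. intros [H1 _] [H2 _]. eapply open_ext; eauto. Qed.

Lemma cs_S : common_sol delta_open wFindHS_Sigma01.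
Proof.
  apply (common_from_class Copen Copen_ram Copen_res).
  - intros q z Hz _. eapply open_Copen; eauto.
  - exact open_ext.
  - intros z h [w [A [B _]]] Hh. repeat split; auto; apply Hh.
Qed.
Lemma cs_P : common_sol delta_open wFindHS_Pi01.
Proof.
  apply (common_from_class Copen Copen_ram Copen_res).
  - intros q z Hz _. eapply open_Copen; eauto.
  - exact open_ext.
  - intros z h [w [A [B _]]] Hh. repeat split; auto; apply Hh.
Qed.
Lemma cs_D : common_sol delta_clopen wFindHS_Delta01.
Proof.
  apply (common_from_class Copen Copen_ram Copen_res).
  - intros q z Hz _. eapply clopen_Copen; eauto.
  - exact clopen_ext.
  - intros z h [w [A [B _]]] Hh. repeat split; auto; apply Hh.
Qed.
Lemma cs_SR : common_sol delta_open Sigma01_RT.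
Proof.
  apply (common_from_class Copen Copen_ram Copen_res).
  - intros q z Hz _. eapply open_Copen; eauto.
  - exact open_ext.
  - intros z h [w [A _]] Hh. split; auto.
Qed.
Lemma cs_DR : common_sol delta_clopen Delta01_RT.
Proof.
  apply (common_from_class Copen Copen_ram Copen_res).
  - intros q z Hz _. eapply clopen_Copen; eauto.
  - exact clopen_ext.
  - intros z h [w [A _]] Hh. split; auto.
Qed.

Theorem mainTheorem14 :
  (forall (Gamma : ((nat -> nat) -> Prop) -> Prop)
          (delta : (nat -> nat) -> ((nat -> nat) -> Prop) -> Prop),
     is_pointclass_rep Gamma delta ->
     wadge_downward_closed Gamma ->
     all_ramsey Gamma ->
     restriction_property Gamma ->
     forall R : ((nat -> nat) -> Prop) -> (nat -> nat) -> Prop,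
       (forall x y, R x y -> Gamma x) ->
       (forall x, (exists y, R x y) -> forall y, R x y <-> HS x y) ->
       ~ sW_le delta_2 delta_2 id2 delta delta_RS R)
  /\
  (~ sW_le delta_2 delta_2 id2 delta_open delta_RS wFindHS_Sigma01 /\
   ~ sW_le delta_2 delta_2 id2 delta_open delta_RS wFindHS_Pi01 /\
   ~ sW_le delta_2 delta_2 id2 delta_clopen delta_RS wFindHS_Delta01 /\
   ~ sW_le delta_2 delta_2 id2 delta_open delta_RS Sigma01_RT /\
   ~ sW_le delta_2 delta_2 id2 delta_clopen delta_RS Delta01_RT)
  /\
  (~ sW_le delta_closed delta_Baire UC_Baire delta_open delta_RS wFindHS_Sigma01 /\
   ~ sW_le delta_closed delta_Baire UC_Baire delta_open delta_RS wFindHS_Pi01 /\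
   ~ sW_le delta_closed delta_Baire UC_Baire delta_clopen delta_RS wFindHS_Delta01 /\
   ~ sW_le delta_closed delta_Baire UC_Baire delta_open delta_RS Sigma01_RT /\
   ~ sW_le delta_closed delta_Baire UC_Baire delta_clopen delta_RS Delta01_RT).
Proof.
  split; [exact part1|]. split.
  - repeat split; apply part2_core; auto using cs_S, cs_P, cs_D, cs_SR, cs_DR.
  - repeat split; apply part3_core; auto using cs_S, cs_P, cs_D, cs_SR, cs_DR.
Qed.
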